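(* Let $\mathcal{A}$ be a locally constant algebraic conformal net, and let $A$ be the associative $\mathbf{K}$-algebra that $\mathcal{A}$ assigns to every positively-oriented interval. Then $A$ is commutative.
   Context: Fix a field $\mathbf{K}$. $\mathsf{Algebra}$ denotes the category of associative unital $\mathbf{K}$-algebras and algebra homomorphisms. Orient $\mathbf{R}$ from the negative to the positive reals. An interval is an oriented compact connected one-dimensional submanifold of $\mathbf{R}$, which is either positively-oriented (orientation induced from $\mathbf{R}$) or negatively-oriented (opposite orientation); $\overline{I}$ denotes $I$ with reversed orientation, and $J$ is a subinterval of $I$ if $J\subset I$. $\mathsf{INT}$ is the category whose objects are intervals and whose morphisms are orientation-preserving embeddings. An algebraic conformal net is a functor $\mathcal{A}\colon \mathsf{INT}\to\mathsf{Algebra}$ with $\mathcal{A}(\overline{I})=\mathcal{A}(I)^{\mathrm{op}}$ for every interval $I$, such that, for all subintervals $I,J$ of an interval $K$ with inclusions $i\colon I\hookrightarrow K$, $j\colon J\hookrightarrow K$: (1) (isotony) $\mathcal{A}(f)$ is injective for every embedding $f$; (2) (locality) if $I$ and $J$ have disjoint interiors, then $\mathcal{A}(i)(\mathcal{A}(I))$ and $\mathcal{A}(j)(\mathcal{A}(J))$ are mutually commuting subalgebras of $\mathcal{A}(K)$; (3) (strong additivity) if $K=I\cup J$, then $\mathcal{A}(K)$ is generated as an algebra by $\mathcal{A}(i)(\mathcal{A}(I))$ and $\mathcal{A}(j)(\mathcal{A}(J))$. An algebraic conformal net $\mathcal{A}$ is locally constant if it maps every positively-oriented interval to one and the same algebra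 $A$ and every embedding between positively-oriented intervals to the identity of $A$. *)

(* Defs.v *)
From Stdlib Require Import Reals.
From Coquelicot Require Import Coquelicot.
From HB Require Import structures.
From mathcomp Require Import all_boot all_algebra.

Set Implicit Arguments.
Unset Strict Implicit.
Unset Printing Implicit Defensive.

(** An interval is [lo, hi] with lo < hi (a compact connected 1-dimensional
    submanifold of R), together with an orientation: [ipos = true] means
    positively oriented (orientation induced from R), [false] negatively. *)
Record interval := Interval {
  ilo : R;
  ihi : R;
  ilo_lt_hi : Rlt ilo ihi;
  ipos : bool }.

Definition irev (I : interval) : interval :=
  Interval (ilo_lt_hi I) (~~ ipos I).

Definition inI (I : interval) (x : R) : Prop := Rle (ilo I) x /\ Rle x (ihi I).

(** Orientation-preserving (smooth) embeddings [I -> J]: restrictions to [I]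
    of smooth maps [R -> R] mapping [I] into [J] whose derivative does not
    vanish on [I], with positive sign when [I] and [J] have the same
    orientation and negative sign otherwise. (Non-vanishing derivative on the
    compact interval [I] makes the map an injective immersion, hence an
    embedding.) *)
Record emb (I J : interval) := Emb {
  emb_fun :> R -> R;
  emb_smooth : forall (n : nat) (x : R), ex_derive_n emb_fun n x;
  emb_maps : forall x, inI I x -> inI J (emb_fun x);
  emb_orient : forall x, inI I x ->
    if ipos I == ipos J then Rlt R0 (Derive emb_fun x)
    else Rlt (Derive emb_fun x) R0 }.

Import GRing.Theory.
Local Open Scope ring_scope.

(** * Associative unital K-algebras (the zero algebra included).
    The underlying K-vector space is a MathComp [lmodType K]. *)
Record kalg (K : fieldType) := KAlg {
  kvs :> lmodType K;
  kmul : kvs -> kvs -> kvs;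
  kone : kvs;
  kmulA : forall x y z, kmul x (kmul y z) = kmul (kmul x y) z;
  kmul1r : forall x, kmul kone x = x;
  kmulr1 : forall x, kmul x kone = x;
  kmulDl : forall x y z, kmul (x + y) z = kmul x z + kmul y z;
  kmulDr : forall x y z, kmul x (y + z) = kmul x y + kmul x z;
  kscaleAl : forall (a : K) x y, a *: kmul x y = kmul (a *: x) y;
  kscaleAr : forall (a : K) x y, a *: kmul x y = kmul x (a *: y) }.
Arguments kmul {K} k _ _.
Arguments kone {K} k.

Definition kalg_op (K : fieldType) (A : kalg K) : kalg K :=
  @KAlg K (kvs A) (fun x y : kvs A => kmul A y x) (kone A)
    (fun x y z : kvs A => esym (@kmulA _ A z y x))
    (@kmulr1 _ A) (@kmul1r _ A)
    (fun x y z : kvs A => @kmulDr _ A z x y) (fun x y z : kvs A => @kmulDl _ A y z x)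
    (fun (a : K) (x y : kvs A) => @kscaleAr _ A a y x)
    (fun (a : K) (x y : kvs A) => @kscaleAl _ A a y x).

Record alg_hom (K : fieldType) (A B : kalg K) := AlgHom {
  ahom :> A -> B;
  ahomD : forall x y, ahom (x + y) = ahom x + ahom y;
  ahomZ : forall (a : K) x, ahom (a *: x) = a *: ahom x;
  ahomM : forall x y, ahom (kmul A x y) = kmul B (ahom x) (ahom y);
  ahom1 : ahom (kone A) = kone B }.

Definition subalg_closed (K : fieldType) (A : kalg K) (S : A -> Prop) :=
  [/\ S (kone A),
      forall x y, S x -> S y -> S (x + y),
      forall (a : K) x, S x -> S (a *: x) &
      forall x y, S x -> S y -> S (kmul A x y)].

(** A functor INT -> Algebra: object map [netA], morphism map [netF]
    (well defined on embeddings, i.e. depending only on the map on [I]),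
    preserving identities and composition; together with the conditions
    A(rev I) = A(I)^op, isotony, locality and strong additivity.
    Inclusions of subintervals [I ⊆ K] are the embeddings [i : emb I K]
    that are the identity on [I] (these exist exactly when [I ⊆ K] with the
    same orientation). *)
Record conformal_net (K : fieldType) := ConformalNet {
  netA : interval -> kalg K;
  netF : forall I J, emb I J -> alg_hom (netA I) (netA J);
  netF_ext : forall I J (f g : emb I J),
    (forall x, inI I x -> f x = g x) -> forall a, netF f a = netF g a;
  netF_id : forall I (f : emb I I),
    (forall x, inI I x -> f x = x) -> forall a, netF f a = a;
  netF_comp : forall I J L (f : emb I J) (g : emb J L) (h : emb I L),
    (forall x, inI I x -> h x = g (f x)) ->
    forall a, netF h a = netF g (netF f a);
  net_op : forall I, netA (irev I) = kalg_op (netA I);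
  net_isotony : forall I J (f : emb I J), injective (netF f);
  net_locality : forall I J L (i : emb I L) (j : emb J L),
    (forall x, inI I x -> i x = x) -> (forall x, inI J x -> j x = x) ->
    Rle (ihi I) (ilo J) \/ Rle (ihi J) (ilo I) ->
    forall a b, kmul (netA L) (netF i a) (netF j b)
                = kmul (netA L) (netF j b) (netF i a);
  net_additivity : forall I J L (i : emb I L) (j : emb J L),
    (forall x, inI I x -> i x = x) -> (forall x, inI J x -> j x = x) ->
    (forall x, inI L x <-> inI I x \/ inI J x) ->
    forall S : netA L -> Prop, subalg_closed S ->
    (forall a, S (netF i a)) -> (forall b, S (netF j b)) ->
    forall c, S c }.

Definition kalg_cast (K : fieldType) (A B : kalg K) (e : A = B) (a : A) : B :=
  match e in _ = C return kvs C with erefl => a end.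

Definition locally_constant (K : fieldType) (N : conformal_net K) (A : kalg K) :=
  exists e : forall I, ipos I -> netA N I = A,
    forall I J (pI : ipos I) (pJ : ipos J) (f : emb I J) (a : netA N I),
      kalg_cast (e J pJ) (netF N f a) = kalg_cast (e I pI) a.

(* Main.v *)
Require Import Defs.
From Stdlib Require Import Reals.
From Coquelicot Require Import Coquelicot.
From HB Require Import structures.
From mathcomp Require Import all_boot all_algebra.
From Stdlib Require Import Lra.

Lemma cast_mul (K : fieldType) (B C : kalg K) (e : B = C) (u v : B) :
  kalg_cast e (kmul B u v) = kmul C (kalg_cast e u) (kalg_cast e v).
Proof. by destruct e. Qed.

Lemma cast_inv (K : fieldType) (B C : kalg K) (e : B = C) (x : C) :
  kalg_cast e (kalg_cast (esym e) x) = x.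
Proof. by destruct e. Qed.

Local Open Scope R_scope.
Lemma id_smooth n x : ex_derive_n (fun y : R => y) n x.
Proof.
apply: (ex_derive_n_ext (fun y => y ^ 1)); last exact: ex_derive_n_pow.
move=> t /=; ring.
Qed.

Lemma id_Derive x : Derive (fun y : R => y) x = R1.
Proof. exact: Derive_id. Qed.

Definition mkI (a b : R) (h : Rlt a b) : Defs.interval := @Defs.Interval a b h true.

Lemma lt01 : Rlt R0 R1. Proof. lra. Qed.
Lemma lt12 : Rlt R1 (R1 + R1). Proof. lra. Qed.
Lemma lt02 : Rlt R0 (R1 + R1). Proof. lra. Qed.

Definition incl (I J : Defs.interval) (hp : ipos I = ipos J)
  (hs : forall x, inI I x -> inI J x) : emb I J.
Proof.
refine (@Emb I J (fun y => y) id_smooth hs _).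
move=> x _; rewrite hp eqxx id_Derive; exact: Rlt_0_1.
Defined.

Local Close Scope R_scope.
Theorem mainTheorem1 (K : fieldType) (N : conformal_net K) (A : kalg K) :
  locally_constant N A -> forall x y : A, kmul A x y = kmul A y x.
Proof.
move=> [e He] x y.
pose I1 := @mkI _ _ lt01. pose I2 := @mkI _ _ lt12. pose L := @mkI _ _ lt02.
have s1 : forall z, inI I1 z -> inI L z by move=> z; rewrite /inI /= => -[h1 h2]; split; lra.
have s2 : forall z, inI I2 z -> inI L z by move=> z; rewrite /inI /= => -[h1 h2]; split; lra.
pose i := @incl I1 L erefl s1. pose j := @incl I2 L erefl s2.
have p1 : ipos I1 by []. have p2 : ipos I2 by []. have pL : ipos L by [].
pose a := kalg_cast (esym (e I1 p1)) x.
pose b := kalg_cast (esym (e I2 p2)) y.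
have Hc := @net_locality _ N I1 I2 L i j (fun _ _ => erefl) (fun _ _ => erefl)
  (or_introl (Rle_refl _)) a b.
have := f_equal (kalg_cast (e L pL)) Hc.
rewrite !cast_mul (He _ _ p1 pL) (He _ _ p2 pL) /a /b !cast_inv.
exact: id.
Qed.
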